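(* Let $\mathbb{G}$ be a finite graph and let $\mathbb{H}$ be a graph that contains a copy of $\mathbb{K}_3$ (i.e., three distinct vertices pairwise joined by edges) and such that $\mathrm{Pol}(\mathbb{H})$ satisfies $\Sigma_{\mathbb{G}}$. Then there is a graph homomorphism from $\mathbb{G}$ to $\mathbb{H}$.
   Context: A graph is a structure $(V,E)$ with a single symmetric binary relation $E$ (loops allowed); $\mathbb{K}_3$ is the complete loopless graph on three vertices. For a graph $\mathbb{H}$, a polymorphism is a homomorphism from the power $\mathbb{H}^n$ (vertex set $H^n$, with $(\bar a,\bar b)$ an edge iff $(a_i,b_i)$ is an edge for all $i$) to $\mathbb{H}$; $\mathrm{Pol}(\mathbb{H})$ is the set of all polymorphisms. A set of functions satisfies a height 1 condition (a finite set of identities $f(x_{\pi(1)},\dots,x_{\pi(n)})\approx g(x_{\rho(1)},\dots,x_{\rho(m)})$, universally quantified) if its symbols can be assigned functions of the set of the right arities making all identities true. For a finite graph $\mathbb{G}=(V,E)$, $\Sigma_{\mathbb{G}}$ is the height 1 condition with a ternary symbol $f_v$ for each $v\in V$, a $6$-ary symbol $g_{(u,v)}$ for each $(u,v)\in E$, and, for each $(u,v)\in E$, the identities $f_u(x,y,z)\approx g_{(u,v)}(x,y,x,z,y,z)$ and $f_v(x,y,z)\approx g_{(u,v)}(y,x,z,x,z,y)$. *)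

(* Defs.v *)
From mathcomp Require Import all_boot.
Set Implicit Arguments. Unset Strict Implicit. Unset Printing Implicit Defensive.

Definition is_pol (H : Type) (E : H -> H -> Prop) (n : nat)
  (f : ('I_n -> H) -> H) : Prop :=
  forall a b : 'I_n -> H, (forall i, E (a i) (b i)) -> E (f a) (f b).

(* Variable patterns of the identities of Sigma_G, with x,y,z = 0,1,2:
   left:  g(x,y,x,z,y,z)      right: g(y,x,z,x,z,y) *)
Definition pat_l (j : 'I_6) : 'I_3 := inord (nth 0 [:: 0; 1; 0; 2; 1; 2] j).
Definition pat_r (j : 'I_6) : 'I_3 := inord (nth 0 [:: 1; 0; 2; 0; 2; 1] j).

Definition satisfies_SigmaG (V : finType) (EG : rel V)
  (H : Type) (EH : H -> H -> Prop) : Prop :=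
  exists (f : V -> ('I_3 -> H) -> H) (g : V -> V -> ('I_6 -> H) -> H),
    (forall v, is_pol EH (f v)) /\
    (forall u v, EG u v -> is_pol EH (g u v)) /\
    (forall u v, EG u v -> forall x : 'I_3 -> H,
        f u x = g u v (fun j => x (pat_l j)) /\
        f v x = g u v (fun j => x (pat_r j))).

Definition contains_K3 (H : Type) (EH : H -> H -> Prop) : Prop :=
  exists a b c : H, [/\ a <> b, b <> c & a <> c] /\ EH a b /\ EH b c /\ EH a c.

Definition graph_hom (V : finType) (EG : rel V) (H : Type) (EH : H -> H -> Prop)
  (h : V -> H) : Prop := forall u v, EG u v -> EH (h u) (h v).

(* Main.v *)
Require Import Defs.
From mathcomp Require Import all_boot.

Theorem lemma3p2 (V : finType) (EG : rel V) (H : Type) (EH : H -> H -> Prop) :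
  symmetric EG ->
  (forall a b : H, EH a b -> EH b a) ->
  contains_K3 EH ->
  satisfies_SigmaG EG EH ->
  exists h : V -> H, graph_hom EG EH h.
Proof.
move=> _ Hsym [a [b [c [_ [Hab [Hbc Hac]]]]]] [f [g [_ [Hg Hfg]]]].
pose x : 'I_3 -> H := fun i => match val i with 0 => a | 1 => b | _ => c end.
exists (fun v => f v x) => u v Huv.
have [-> ->] := Hfg u v Huv x.
apply: (Hg u v Huv) => j.
rewrite /x /pat_l /pat_r.
case: j => [[|[|[|[|[|[|k]]]]]] Hk] //=; rewrite ?inordK //; auto.
Qed.
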